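(* Let $n\ge1$. If $f,g,h:\Omega_n\to\mathbb{R}$ have mutually disjoint supports, then $(f+g+h)^\wedge=(f+g)^\wedge+(f+h)^\wedge+(g+h)^\wedge-\widehat{f}-\widehat{g}-\widehat{h}$.
   Context: $\Omega_n=\{\omega_0,\dots,\omega_{2^n-1}\}$ is the set of strings $\alpha_0\alpha_1\cdots\alpha_n$ with $\alpha_k\in\{0,1\}$, $\alpha_0=0$ ($\omega_j$ being the binary representation of $j$). For $u:\Omega_n\to[0,\infty)$, $\widehat{u}$ is the $2^n\times2^n$ matrix with entries $\widehat{u}_{jk}=\min[u(\omega_j),u(\omega_k)]$. For arbitrary $f:\Omega_n\to\mathbb{R}$, write $f=f^+-f^-$ with $f^+,f^-\ge0$, $f^+f^-=0$, and set $\widehat{f}=\widehat{f^+}-\widehat{f^-}$; $(f)^\wedge$ means $\widehat{f}$. *)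

(* Defs.v *)
From HB Require Import structures.
From mathcomp Require Import all_boot all_order all_algebra.
From mathcomp Require Import reals.
Set Implicit Arguments. Unset Strict Implicit. Unset Printing Implicit Defensive.
Import Order.TTheory GRing.Theory Num.Theory.
Local Open Scope ring_scope.

(* Omega_n = {omega_0, ..., omega_(2^n - 1)}, omega_j the binary string of j
   (length n+1, leading digit 0).  We identify omega_j with its index j,
   so Omega_n is represented by the ordinal type 'I_(2^n). *)
Definition Omega (n : nat) : finType := 'I_(2 ^ n).

Definition pos_part {R : realType} n (f : Omega n -> R) : Omega n -> R :=
  fun x => Num.max (f x) 0.
Definition neg_part {R : realType} n (f : Omega n -> R) : Omega n -> R :=
  fun x => Num.max (- f x) 0.

Definition hat_nonneg {R : realType} n (u : Omega n -> R) : 'M[R]_(2 ^ n) :=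
  \matrix_(j, k) Num.min (u j) (u k).

Definition hat {R : realType} n (f : Omega n -> R) : 'M[R]_(2 ^ n) :=
  hat_nonneg (pos_part f) - hat_nonneg (neg_part f).

Definition supp {R : realType} n (f : Omega n -> R) : {set Omega n} :=
  [set x | f x != 0].

(* Main.v *)
Require Import Defs.
From HB Require Import structures.
From mathcomp Require Import all_boot all_order all_algebra.
From mathcomp Require Import reals.
From mathcomp Require Import lra.
Import Order.TTheory GRing.Theory Num.Theory.
Local Open Scope ring_scope.

Definition Ef {R : realType} (a b : R) : R :=
  Num.min (Num.max a 0) (Num.max b 0) - Num.min (Num.max (- a) 0) (Num.max (- b) 0).

Lemma hatE {R : realType} n (F : Omega n -> R) j k : hat F j k = Ef (F j) (F k).
Proof. by rewrite /hat !mxE /pos_part /neg_part. Qed.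

Lemma min0 {R : realType} {x : R} : 0 <= x -> Num.min x 0 = 0 /\ Num.min 0 x = 0.
Proof.
move=> hx; rewrite !minEle hx; split=> //.
by case: ifP => // H; apply/le_anti; rewrite H hx.
Qed.

Lemma mx0 {R : realType} (x : R) : 0 <= Num.max x 0.
Proof. by rewrite le_max lexx orbT. Qed.

Lemma Ef0l {R : realType} (b : R) : Ef 0 b = 0.
Proof.
by rewrite /Ef oppr0 maxxx (min0 (mx0 b)).2 (min0 (mx0 (-b))).2 subrr.
Qed.

Lemma Ef0r {R : realType} (a : R) : Ef a 0 = 0.
Proof.
by rewrite /Ef oppr0 maxxx (min0 (mx0 a)).1 (min0 (mx0 (-a))).1 subrr.
Qed.

Lemma dis {R : realType} {n} {f g : Omega n -> R} :
  [disjoint supp f & supp g] -> forall x, f x = 0 \/ g x = 0.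
Proof.
move=> /pred0P H x; have := H x; rewrite /= !inE.
by case: eqP => [->|_]; [left|case: eqP => [->|]; [right|]].
Qed.

Theorem lemma5p4 (R : realType) (n : nat) (f g h : Omega n -> R) :
  (0 < n)%N ->
  [disjoint supp f & supp g] ->
  [disjoint supp f & supp h] ->
  [disjoint supp g & supp h] ->
  hat (fun x => f x + g x + h x) =
    hat (fun x => f x + g x) + hat (fun x => f x + h x) + hat (fun x => g x + h x)
    - hat f - hat g - hat h.
Proof.
move=> _ Hfg Hfh Hgh; apply/matrixP => j k; rewrite !mxE /pos_part /neg_part -!/(Ef _ _).
have key : forall x, (g x = 0 /\ h x = 0) \/ (f x = 0 /\ h x = 0) \/ (f x = 0 /\ g x = 0).
  move=> x; case: (dis Hfg x) => A; case: (dis Hfh x) => B; case: (dis Hgh x) => C; tauto.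
case: (key j) => [[-> ->]|[[-> ->]|[-> ->]]];
case: (key k) => [[-> ->]|[[-> ->]|[-> ->]]];
rewrite ?addr0 ?add0r ?Ef0l ?Ef0r ?subr0 ?add0r ?addr0; 
try (set e := Ef _ _); rewrite ?subr0 ?sub0r ?addr0 ?add0r; lra.
Qed.
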